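(* Let $H$ be a 0-SYM filter such that every solution $z$ of $H(z)=1$ satisfies $\operatorname{Re}(z)>0$. Then: (A) every pole of $H$ in $\mathbb C$ lies on the imaginary axis $i\mathbb R$; (B) every solution $z$ of $H(z)=-1$ satisfies $\operatorname{Re}(z)<0$.
   Context: A 0-SYM filter is a rational function $H(z)$ with real coefficients satisfying $H(z)^2+H(-z)^2=1$ and $H(z)=H(z^{-1})$. *)

(* Defs.v *)
From HB Require Import structures.
From mathcomp Require Import all_boot all_order all_algebra.
From mathcomp Require Import complex.
Set Implicit Arguments. Unset Strict Implicit. Unset Printing Implicit Defensive.
Import Order.TTheory GRing.Theory Num.Theory.
Local Open Scope ring_scope.

(* A real rational function H = P/Q (P, Q real polynomials, Q <> 0, written
   in lowest terms, i.e. P and Q coprime), evaluated at complex points. *)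
Definition cpoly (R : rcfType) (p : {poly R}) : {poly R[i]} :=
  map_poly (fun x : R => x%:C%C) p.

Definition Hdef (R : rcfType) (Q : {poly R}) (z : R[i]) : bool :=
  (cpoly Q).[z] != 0.
Definition Hval (R : rcfType) (P Q : {poly R}) (z : R[i]) : R[i] :=
  (cpoly P).[z] / (cpoly Q).[z].

(* H = P/Q is a 0-SYM filter: H(z)^2 + H(-z)^2 = 1 and H(z) = H(1/z), as
   identities of rational functions, i.e. at every point where both sides
   are defined. *)
Definition zero_sym (R : rcfType) (P Q : {poly R}) : Prop :=
  [/\ Q != 0, coprimep P Q,
      (forall z : R[i], Hdef Q z -> Hdef Q (- z) ->
          Hval P Q z ^+ 2 + Hval P Q (- z) ^+ 2 = 1) &
      (forall z : R[i], z != 0 -> Hdef Q z -> Hdef Q z^-1 ->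
          Hval P Q z = Hval P Q z^-1)].

Definition is_pole (R : rcfType) (Q : {poly R}) (z : R[i]) : Prop :=
  (cpoly Q).[z] = 0.

(* Main.v *)
From HB Require Import structures.
From mathcomp Require Import all_boot all_order all_algebra.
From mathcomp Require Import complex ring lra.
Require Import Defs.
Import Order.TTheory GRing.Theory Num.Theory.
Local Open Scope ring_scope.

Set Implicit Arguments.
Section S.
Variable R : rcfType.
Local Notation C := R[i].

Definition sqn (w : C) : R := complex.Re w ^+ 2 + complex.Im w ^+ 2.

Lemma sqnM (a b : C) : sqn (a * b) = sqn a * sqn b.
Proof. by case: a => a1 a2; case: b => b1 b2; rewrite /sqn /=; ring. Qed.

Lemma sqn_ge0 a : 0 <= sqn a.
Proof. by rewrite /sqn addr_ge0 ?sqr_ge0. Qed.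

Lemma sqn_eq0 a : sqn a = 0 -> a = 0.
Proof.
case: a => a1 a2; rewrite /sqn /= => h.
have h1 : a1 ^+ 2 = 0 by apply/eqP; rewrite eq_le sqr_ge0 andbT; nra.
have h2 : a2 ^+ 2 = 0 by apply/eqP; rewrite eq_le sqr_ge0 andbT; nra.
move/eqP: h1; rewrite sqrf_eq0 => /eqP ->.
by move/eqP: h2; rewrite sqrf_eq0 => /eqP ->.
Qed.

Lemma sqnN a : sqn (- a) = sqn a.
Proof. by case: a => a1 a2; rewrite /sqn /=; ring. Qed.

Lemma sqnJ a : sqn (a^*)%C = sqn a.
Proof. by case: a => a1 a2; rewrite /sqn /=; ring. Qed.

Lemma sqn1 : sqn 1 = 1.
Proof. by rewrite /sqn /=; ring. Qed.

Lemma sqn_prod (I : Type) (r : seq I) (F : I -> C) :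
  sqn (\prod_(i <- r) F i) = \prod_(i <- r) sqn (F i).
Proof. by apply: (big_morph sqn sqnM sqn1). Qed.



Lemma sqn_fact_le (z r : C) : 0 <= complex.Re z -> 0 < complex.Re r ->
  sqn (z - r) <= sqn (- (z^*)%C - r).
Proof.
case: z => a b; case: r => c d; rewrite /sqn /= => ha hc.
have : 0 <= a * c by rewrite mulr_ge0 // ltW.
move=> hac; nra.
Qed.

Lemma sqn_fact_lt (z r : C) : 0 < complex.Re z -> 0 < complex.Re r ->
  sqn (z - r) < sqn (- (z^*)%C - r).
Proof.
case: z => a b; case: r => c d; rewrite /sqn /= => ha hc.
have : 0 < a * c by rewrite mulr_gt0.
move=> hac; nra.
Qed.

Lemma cpoly_conj (p : {poly R}) x : (cpoly p).[(x^*)%C] = ((cpoly p).[x])^*%C.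
Proof.
have E : cpoly p = map_poly (@conjc R) (cpoly p).
  rewrite /cpoly -map_poly_comp; apply: eq_map_poly => y /=.
  by rewrite /= oppr0.
by rewrite {1}E horner_map.
Qed.

Lemma prod_ineq (D : {poly C}) :
  (forall x, D.[(x^*)%C] = (D.[x])^*%C) -> D != 0 ->
  (forall r, root D r -> 0 < complex.Re r) ->
  (forall z, 0 <= complex.Re z -> sqn D.[z] <= sqn D.[- z]) /\
  (forall z, 0 < complex.Re z -> size D != 1%N -> sqn D.[z] < sqn D.[- z]).
Proof.
move=> hJ D0 hroot.
have [rs E] := closed_field_poly_normal D.
have lc0 : lead_coef D != 0 by rewrite lead_coef_eq0.
have inrs : forall r, r \in rs -> 0 < complex.Re r.
  move=> r hr; apply: hroot; rewrite E rootZ // root_prod_XsubC //.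
have key : forall z, sqn D.[- z] = sqn D.[- (z^*)%C].
  by move=> z; rewrite -sqnJ -hJ rmorphN.
split=> [z hz|z hz hs]; rewrite key E !hornerZ !sqnM !horner_prod !sqn_prod.
  apply: ler_wpM2l; first exact: sqn_ge0.
  rewrite !big_seq; apply: ler_prod => r hr.
  by rewrite !hornerXsubC sqn_ge0 sqn_fact_le // inrs.
rewrite ltr_pM2l; last first.
  by rewrite lt_def sqn_ge0 andbT; apply/eqP => /sqn_eq0/eqP; rewrite (negPf lc0).
rewrite !big_seq; apply: ltr_prod => [|r hr].
  case: rs E inrs => [|r rs] E _ //.
  by move: hs; rewrite E size_scale // big_nil size_poly1.
  by apply/hasP; exists r; rewrite ?mem_head.
by rewrite !hornerXsubC sqn_ge0 sqn_fact_lt // inrs.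
Qed.

Lemma allroots0 (g : {poly C}) : (forall x, g.[x] = 0) -> g = 0.
Proof.
move=> h; apply/eqP; apply: contraT => g0.
have := max_poly_roots g0 (rs := [seq i%:R | i <- iota 0 (size g)]).
rewrite size_map size_iota ltnn; apply.
  by apply/allP => x _; rewrite /root h.
rewrite map_inj_uniq ?iota_uniq // => a b /eqP.
by rewrite eqr_nat => /eqP.
Qed.

Lemma sqn_sq (a b : C) : a ^+ 2 = b ^+ 2 -> sqn a = sqn b.
Proof.
move=> h; have : sqn (a ^+ 2) = sqn (b ^+ 2) by rewrite h.
rewrite !expr2 !sqnM -!expr2 => /eqP; rewrite eqrXn2 ?sqn_ge0 //.
by move/eqP.
Qed.

Lemma sqn_sqN (a b : C) : a ^+ 2 = - b ^+ 2 -> sqn a = sqn b.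
Proof.
move=> h; have : sqn (a ^+ 2) = sqn (b ^+ 2) by rewrite h sqnN.
rewrite !expr2 !sqnM -!expr2 => /eqP; rewrite eqrXn2 ?sqn_ge0 //.
by move/eqP.
Qed.

Lemma sqn_dbl (a : C) : sqn (a + a) = 4%:R * sqn a.
Proof. by case: a => a1 a2; rewrite /sqn /=; ring. Qed.

Lemma sqn_gt0 (a : C) : a != 0 -> 0 < sqn a.
Proof.
by move=> a0; rewrite lt_def sqn_ge0 andbT; apply/eqP => /sqn_eq0/eqP; rewrite (negPf a0).
Qed.

End S.

Theorem theorem3 (R : rcfType) (P Q : {poly R}) :
  zero_sym P Q ->
  (forall z : R[i], Hdef Q z -> Hval P Q z = 1 -> 0 < complex.Re z) ->
  (forall z : R[i], is_pole Q z -> complex.Re z = 0) /\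
  (forall z : R[i], Hdef Q z -> Hval P Q z = -1 -> complex.Re z < 0).
Proof.
move=> [Q0 cop Hsym Hinv] H1.
rewrite /Hdef /Hval /is_pole in Hsym H1 *.
have cpE : forall X : {poly R}, cpoly X = map_poly (real_complex R) X by [].
set p := cpoly P in Hsym H1 *; set q := cpoly Q in Hsym H1 *.
have q0 : q != 0 by rewrite /q cpE map_poly_eq0.
have copc : coprimep p q by rewrite /p /q !cpE coprimep_map.
have common : forall x, q.[x] = 0 -> p.[x] != 0.
  have cq : coprimep q p by rewrite coprimep_sym.
  move=> x hx; apply: (coprimep_root cq).
  by rewrite /root hx.
pose pm := p \Po (- 'X); pose qm := q \Po (- 'X).
have hpm x : pm.[x] = p.[- x] by rewrite horner_comp hornerN hornerX.
have hqm x : qm.[x] = q.[- x] by rewrite horner_comp hornerN hornerX.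
have qm0 : qm != 0.
  apply/eqP => h; move/eqP: q0; apply; apply: allroots0 => x.
  by rewrite -[x]opprK -hqm h horner0.
have E0 : p^+2 * qm^+2 + pm^+2 * q^+2 = q^+2 * qm^+2.
  apply/eqP; rewrite -subr_eq0; apply/eqP.
  have : (p^+2 * qm^+2 + pm^+2 * q^+2 - q^+2 * qm^+2) * (q * qm) = 0.
    apply: allroots0 => x.
    rewrite !(hornerM, hornerD, hornerN, horner_exp) hpm hqm.
    have [hx|hx] := eqVneq q.[x] 0; first by rewrite hx; ring.
    have [hy|hy] := eqVneq q.[- x] 0; first by rewrite hy; ring.
    have := Hsym x hx hy.
    move: (p.[x]) (p.[-x]) (q.[x]) (q.[-x]) hx hy => a c b d hb hd h.
    have -> : a ^+ 2 * d ^+ 2 + c ^+ 2 * b ^+ 2 - b ^+ 2 * d ^+ 2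
           = b ^+ 2 * d ^+ 2 * ((a / b) ^+ 2 + (c / d) ^+ 2 - 1).
      by field; rewrite hb hd.
    by rewrite h subrr mulr0 mul0r.
  by move/eqP; rewrite mulf_eq0 (negPf (mulf_neq0 q0 qm0)) orbF => /eqP.
have sq : size qm = size q by rewrite size_comp_poly2 // size_polyN size_polyX.
have lq : lead_coef qm = lead_coef q * (-1) ^+ (size q).-1.
  by rewrite lead_coef_comp ?size_polyN ?size_polyX // lead_coefN lead_coefX.
have q20 : q ^+ 2 != 0 by rewrite expf_neq0.
have qm20 : qm ^+ 2 != 0 by rewrite expf_neq0.
have Eq : qm ^+ 2 = q ^+ 2.
  have E1 : p^+2 * qm^+2 = q^+2 * (qm^+2 - pm^+2).
    by rewrite mulrBr -E0; ring.
  have d1 : q^+2 %| qm^+2.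
    have : q^+2 %| p^+2 * qm^+2 by rewrite E1 dvdp_mulIl.
    by rewrite Gauss_dvdpr // coprimep_expl // coprimep_expr // coprimep_sym.
  have : q^+2 %= qm^+2.
    rewrite -dvdp_size_eqp //.
    by rewrite (polySpred q20) (polySpred qm20) !size_exp sq.
  case/eqpP => [[c1 c2]] /andP [c10 c20] /= h.
  have ll : lead_coef (qm ^+ 2) = lead_coef (q ^+ 2).
    by rewrite !lead_coef_exp lq exprMn -exprM mulnC exprM sqrrN !expr1n mulr1.
  have c12 : c1 = c2.
    have := congr1 lead_coef h; rewrite !lead_coefZ ll => /mulIf; apply.
    by rewrite lead_coef_eq0.
  by apply: (scalerI c10); rewrite h c12.
have E4 : p^+2 + pm^+2 = q^+2.
  apply: (mulIf q20); transitivity (p^+2 * qm^+2 + pm^+2 * q^+2).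
    by rewrite Eq; ring.
  by rewrite E0 Eq.
have F3 x : q.[- x] ^+ 2 = q.[x] ^+ 2.
  by have := congr1 (fun g => g.[x]) Eq; rewrite /= !horner_exp hqm.
have F4 x : p.[x] ^+ 2 + p.[- x] ^+ 2 = q.[x] ^+ 2.
  by have := congr1 (fun g => g.[x]) E4; rewrite /= hornerD !horner_exp hpm.
pose d := p - q.
have hd x : d.[x] = p.[x] - q.[x] by rewrite hornerD hornerN.
have dJ x : d.[(x^*)%C] = (d.[x])^*%C.
  by rewrite !hd /p /q !cpoly_conj rmorphB.
have droots : forall r, root d r -> 0 < complex.Re r.
  move=> r; rewrite /root hd subr_eq0 => /eqP hr.
  have qr : q.[r] != 0.
    by apply/eqP => h0; move: (common r h0); rewrite hr h0 eqxx.
  by apply: H1 => //; rewrite hr divff.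
split.
  have pA : forall w, q.[w] = 0 -> 0 < complex.Re w -> False.
    move=> w qw hw.
    have qmw : q.[- w] = 0 by apply/eqP; rewrite -sqrf_eq0 F3 qw expr0n.
    have pw := common w qw.
    have := F4 w; rewrite qw expr0n /= => /eqP; rewrite addr_eq0 => /eqP hpp.
    have dw : d.[w] = p.[w] by rewrite hd qw subr0.
    have dmw : d.[- w] = p.[- w] by rewrite hd qmw subr0.
    have d0 : d != 0 by apply/eqP => h0; move: pw; rewrite -dw h0 horner0 eqxx.
    have [_ hlt] := prod_ineq d dJ d0 droots.
    have [s1|s1] := eqVneq (size d) 1%N.
      have [c _ hc] := size_poly1P d (introT eqP s1).
      move: hpp; rewrite -dw -dmw hc !hornerC => /eqP; rewrite -addr_eq0 -mulr2n.
      rewrite mulrn_eq0 /= sqrf_eq0 => /eqP hc0.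
      by move: pw; rewrite -dw hc hornerC hc0 eqxx.
    have := hlt w hw s1; rewrite dw dmw (@sqn_sqN _ _ _ hpp) ltxx //.
  move=> z qz.
  case: (ltgtP (complex.Re z) 0) => // hz; exfalso.
    apply: (pA (- z)); last by rewrite raddfN /= oppr_gt0.
    by apply/eqP; rewrite -sqrf_eq0 F3 qz expr0n.
  exact: pA z qz hz.
move=> z qz hz; rewrite ltNge; apply/negP => hz0.
have pz : p.[z] = - q.[z].
  by rewrite -[p.[z]](divfK qz) hz mulN1r.
have := F4 z; rewrite pz sqrrN => /eqP; rewrite addrC -subr_eq0 addrK sqrf_eq0 => /eqP pmz.
have dz : d.[z] = - (q.[z] + q.[z]) by rewrite hd pz opprD.
have dmz : d.[- z] = - q.[- z] by rewrite hd pmz sub0r.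
have d0 : d != 0.
  apply/eqP => h0; have : d.[z] = 0 by rewrite h0 horner0.
  by rewrite dz => /eqP; rewrite oppr_eq0 -mulr2n mulrn_eq0 /= (negPf qz).
have [hle _] := prod_ineq d dJ d0 droots.
have := hle z hz0; rewrite dz dmz !sqnN sqn_dbl (@sqn_sq _ _ _ (F3 z)).
have := @sqn_gt0 _ _ qz; move: (sqn R q.[z]) => s hs h4; clear -hs h4; lra.
Qed.
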